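(* Any correlated multi-secret sharing scheme for any joint distribution $p_{XYZ}$ on finite sets satisfies \begin{align*} H(M_{12})&\ge\max\{RI(X;Z),RI(Y;Z)\}+H(X,Y|Z),\\ H(M_{23})&\ge\max\{RI(X;Z),RI(X;Y)\}+H(Y,Z|X),\\ H(M_{31})&\ge\max\{RI(Y;Z),RI(X;Y)\}+H(X,Z|Y). \end{align*}
   Context: A correlated multi-secret sharing (CMSS) scheme for a joint distribution $p_{XYZ}$ on finite sets is a conditional distribution $p_{M_{12}M_{23}M_{31}|XYZ}$ mapping secrets $(X,Y,Z)\sim p_{XYZ}$ probabilistically to shares $(M_{12},M_{23},M_{31})$ such that (correctness) $H(X|M_{12},M_{31})=H(Y|M_{12},M_{23})=H(Z|M_{23},M_{31})=0$ and (privacy) $I((M_{12},M_{31});(Y,Z)|X)=0$, $I((M_{12},M_{23});(X,Z)|Y)=0$, $I((M_{23},M_{31});(X,Y)|Z)=0$. Residual information: $RI(U;V)=I(U;V)-H(U\sqcap V)$, where $U\sqcap V$ has maximum entropy among random variables of the form $f(U)=g(V)$ for deterministic $f,g$. *)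

(* Defs.v *)
From mathcomp Require Import all_boot all_order all_algebra.
From mathcomp Require Import all_classical all_reals all_analysis.
Set Implicit Arguments. Unset Strict Implicit. Unset Printing Implicit Defensive.
Import Order.TTheory GRing.Theory Num.Theory.
Local Open Scope ring_scope.

Definition is_pmf {R : realType} {T : finType} (p : T -> R) : Prop :=
  (forall t, 0 <= p t) /\ \sum_(t : T) p t = 1.

Definition log2 {R : realType} (x : R) : R := ln x / ln 2.

Section Info.
Context {R : realType} {Om : finType} (P : Om -> R).

Definition pr_of {A : finType} (f : Om -> A) (a : A) : R :=
  \sum_(w | f w == a) P w.

(* Shannon entropy (bits); ln 0 = 0 so 0 log 0 = 0 *)
Definition entropy {A : finType} (f : Om -> A) : R :=
  - \sum_(a : A) pr_of f a * log2 (pr_of f a).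

Definition pairRV {A B : finType} (f : Om -> A) (g : Om -> B) : Om -> A * B :=
  fun w => (f w, g w).

Definition cond_entropy {A B : finType} (f : Om -> A) (g : Om -> B) : R :=
  entropy (pairRV f g) - entropy g.

Definition mutual_info {A B : finType} (f : Om -> A) (g : Om -> B) : R :=
  entropy f + entropy g - entropy (pairRV f g).

Definition cond_mutual_info {A B C : finType}
  (f : Om -> A) (g : Om -> B) (h : Om -> C) : R :=
  entropy (pairRV f h) + entropy (pairRV g h)
  - entropy (pairRV (pairRV f g) h) - entropy h.

Definition common_fun {A B W : finType} (U : Om -> A) (V : Om -> B)
  (f : A -> W) (g : B -> W) : bool :=
  [forall w, (P w != 0) ==> (f (U w) == g (V w))].

(* H(U ⊓ V): maximal entropy of a common function f(U) = g(V).  The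
   codomain is taken to be A (the alphabet of U), which loses no generality
   since f(U) takes at most #|A| values. *)
Definition common_entropy {A B : finType} (U : Om -> A) (V : Om -> B) : R :=
  \big[Num.max/0]_(fg : {ffun A -> A} * {ffun B -> A} | common_fun U V fg.1 fg.2)
     entropy (fun w => fg.1 (U w)).

Definition residual_info {A B : finType} (U : Om -> A) (V : Om -> B) : R :=
  mutual_info U V - common_entropy U V.

End Info.

Section CMSS.
Context {R : realType} {X Y Z M12 M23 M31 : finType}.

Definition Omega := ((X * Y * Z) * (M12 * M23 * M31))%type.

Definition joint (p : X * Y * Z -> R) (q : X * Y * Z -> M12 * M23 * M31 -> R)
  : Omega -> R := fun w => p w.1 * q w.1 w.2.

Definition rvX (w : Omega) : X := w.1.1.1.
Definition rvY (w : Omega) : Y := w.1.1.2.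
Definition rvZ (w : Omega) : Z := w.1.2.
Definition rvM12 (w : Omega) : M12 := w.2.1.1.
Definition rvM23 (w : Omega) : M23 := w.2.1.2.
Definition rvM31 (w : Omega) : M31 := w.2.2.

Definition is_CMSS (p : X * Y * Z -> R) (q : X * Y * Z -> M12 * M23 * M31 -> R)
  : Prop :=
  let P := joint p q in
  (forall s, is_pmf (q s)) /\
  cond_entropy P rvX (pairRV rvM12 rvM31) = 0 /\
  cond_entropy P rvY (pairRV rvM12 rvM23) = 0 /\
  cond_entropy P rvZ (pairRV rvM23 rvM31) = 0 /\
  cond_mutual_info P (pairRV rvM12 rvM31) (pairRV rvY rvZ) rvX = 0 /\
  cond_mutual_info P (pairRV rvM12 rvM23) (pairRV rvX rvZ) rvY = 0 /\
  cond_mutual_info P (pairRV rvM23 rvM31) (pairRV rvX rvY) rvZ = 0.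

End CMSS.

(* Main.v *)
Require Import Defs.
From mathcomp Require Import all_boot all_order all_algebra.
From mathcomp Require Import all_classical all_reals all_analysis.
From mathcomp Require Import ring lra.
Set Implicit Arguments. Unset Strict Implicit. Unset Printing Implicit Defensive.
Import Order.TTheory GRing.Theory Num.Theory.
Local Open Scope ring_scope.

Section LnFacts.
Variable R : realType.

Lemma ln_le_sub1 (x : R) : 0 < x -> ln x <= x - 1.
Proof.
move=> x0; have := expR_ge1Dx (ln x); rewrite lnK ?posrE //; lra.
Qed.

Lemma ln_eq_sub1 (x : R) : 0 < x -> ln x = x - 1 -> x = 1.
Proof.
move=> x0 H.
have s0 : 0 < Num.sqrt x by rewrite sqrtr_gt0.
have xs : x = Num.sqrt x * Num.sqrt x by rewrite -expr2 sqr_sqrtr // ltW.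
have H2 : ln x = ln (Num.sqrt x) + ln (Num.sqrt x).
  by rewrite {1}xs lnM ?posrE.
have H1 := ln_le_sub1 s0.
move: (Num.sqrt x) s0 xs H1 H2 => s s0 xs H1 H2.
have e : s = 1 by nra.
by rewrite xs e mulr1.
Qed.

Variable T : finType.
Variables (pabc pac pbc pc : T -> R).
Hypotheses (h0 : forall t, 0 <= pabc t) (h1 : forall t, pabc t <= pac t)
  (h2 : forall t, pabc t <= pbc t) (h3 : forall t, pac t <= pc t)
  (hS : \sum_t pac t * pbc t / pc t <= \sum_t pabc t).

Let term t := pabc t * (ln (pabc t) + ln (pc t) - ln (pac t) - ln (pbc t)).

Lemma term_ge t : pabc t - pac t * pbc t / pc t <= term t.
Proof.
rewrite /term.
have [e|pos] := eqVneq (pabc t) 0.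
  rewrite e mul0r sub0r oppr_le0; apply: divr_ge0; last by apply: le_trans (h3 t); rewrite -e.
  by apply: mulr_ge0; [rewrite -e; exact: h1|rewrite -e; exact: h2].
have p1 : 0 < pabc t by rewrite lt_def pos h0.
have p2 : 0 < pac t by apply: lt_le_trans (h1 t).
have p3 : 0 < pbc t by apply: lt_le_trans (h2 t).
have p4 : 0 < pc t by apply: lt_le_trans (h3 t).
set r := pac t * pbc t / (pabc t * pc t).
have r0 : 0 < r by rewrite /r divr_gt0 ?mulr_gt0.
have lr : ln r = ln (pac t) + ln (pbc t) - ln (pabc t) - ln (pc t).
  rewrite /r ln_div ?posrE ?mulr_gt0 // !lnM ?posrE //; lra.
have := ln_le_sub1 r0; rewrite lr => hl.
have -> : pac t * pbc t / pc t = pabc t * r.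
  rewrite /r; field; apply/andP; split; apply/negP => /eqP; lra.
nra.
Qed.

Lemma shannon_core : 0 <= \sum_t term t.
Proof.
apply: le_trans (ler_sum _ (fun t _ => term_ge t)).
by rewrite sumrB subr_ge0.
Qed.

Lemma shannon_eq : \sum_t term t = 0 -> forall t, pabc t * pc t = pac t * pbc t.
Proof.
move=> H0.
have H : forall t, term t - (pabc t - pac t * pbc t / pc t) = 0.
  have hs : \sum_t (term t - (pabc t - pac t * pbc t / pc t)) = 0.
    apply/eqP; rewrite eq_le; apply/andP; split.
      by rewrite sumrB H0 sumrB sub0r oppr_le0 subr_ge0.
    by apply: sumr_ge0 => t _; rewrite subr_ge0 term_ge.
  move=> t; apply/eqP; move: hs => /eqP; rewrite psumr_eq0.
    by move=> /allP/(_ t (mem_index_enum t)) /implyP; apply.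
  by move=> i _; rewrite subr_ge0 term_ge.
move=> t; have := H t; rewrite /term.
have [e|pos] := eqVneq (pabc t) 0.
  rewrite e mul0r sub0r sub0r opprK mul0r => /eqP; rewrite mulf_eq0 invr_eq0.
  case/orP => [/eqP -> //|/eqP pc0].
  have : pac t = 0 by apply/eqP; rewrite eq_le (le_trans (h3 t)) ?pc0 //= -e h1.
  by move=> ->; rewrite mul0r.
have p1 : 0 < pabc t by rewrite lt_def pos h0.
have p2 : 0 < pac t by apply: lt_le_trans (h1 t).
have p3 : 0 < pbc t by apply: lt_le_trans (h2 t).
have p4 : 0 < pc t by apply: lt_le_trans (h3 t).
set r := pac t * pbc t / (pabc t * pc t).
have r0 : 0 < r by rewrite /r divr_gt0 ?mulr_gt0.
have lr : ln r = ln (pac t) + ln (pbc t) - ln (pabc t) - ln (pc t).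
  rewrite /r ln_div ?posrE ?mulr_gt0 // !lnM ?posrE //; lra.
have -> : pac t * pbc t / pc t = pabc t * r.
  rewrite /r; field; apply/andP; split; apply/negP => /eqP; lra.
move=> h.
have : ln r = r - 1.
  apply: (@mulfI _ (pabc t)) => //; rewrite lr; lra.
move/(ln_eq_sub1 r0) => r1.
have : pac t * pbc t = r * (pabc t * pc t).
  rewrite /r; field; apply/andP; split; apply/negP => /eqP; lra.
by rewrite r1 mul1r.
Qed.

End LnFacts.

Section Found.
Variables (R : realType) (Om : finType) (P : Om -> R).
Hypothesis P0 : forall w, 0 <= P w.

Lemma sum_pr (A : finType) (f : Om -> A) (F : A -> R) :
  \sum_w P w * F (f w) = \sum_a pr_of P f a * F a.
Proof.
rewrite (partition_big f xpredT) //=.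
apply: eq_bigr => a _; rewrite /pr_of big_distrl /=.
by apply: eq_bigr => w /eqP ->.
Qed.

Lemma entropy_w (A : finType) (f : Om -> A) :
  entropy P f = - \sum_w P w * log2 (pr_of P f (f w)).
Proof. by rewrite /entropy (sum_pr f (fun a => log2 (pr_of P f a))). Qed.

Lemma pr_of_mk (A : finType) (f : Om -> A) a :
  pr_of P f a = \sum_w (if f w == a then P w else 0).
Proof. by rewrite /pr_of big_mkcond. Qed.

Lemma entropy_det (A B : finType) (f : Om -> A) (g : Om -> B) :
  (forall w w', P w != 0 -> P w' != 0 -> (f w == f w') = (g w == g w')) ->
  entropy P f = entropy P g.
Proof.
move=> H; rewrite !entropy_w; congr (- _); apply: eq_bigr => w _.
have [->|Pw] := eqVneq (P w) 0; first by rewrite !mul0r.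
congr (_ * log2 _); rewrite !pr_of_mk; apply: eq_bigr => w' _.
have [->|Pw'] := eqVneq (P w') 0; first by rewrite !if_same.
by rewrite eq_sym (H w w') // eq_sym.
Qed.

Lemma entropy_eq (A B : finType) (f : Om -> A) (g : Om -> B) :
  (forall w w', (f w == f w') = (g w == g w')) ->
  entropy P f = entropy P g.
Proof. by move=> H; apply: entropy_det => w w' _ _; apply: H. Qed.


Lemma pr_ge0 (A : finType) (f : Om -> A) a : 0 <= pr_of P f a.
Proof. by apply: sumr_ge0. Qed.

Lemma pr_le (A B : finType) (f : Om -> A) (g : Om -> B) a b :
  (forall w, f w == a -> g w == b) -> pr_of P f a <= pr_of P g b.
Proof.
move=> H; rewrite !pr_of_mk; apply: ler_sum => w _.
case: ifP => [/H -> //|_]; by case: ifP.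
Qed.

Lemma pr_self (A : finType) (f : Om -> A) w : P w <= pr_of P f (f w).
Proof.
rewrite /pr_of (bigD1 w) //= lerDl; exact: sumr_ge0.
Qed.

Lemma pr_marg (A C : finType) (f : Om -> A) (h : Om -> C) c :
  \sum_a pr_of P (pairRV f h) (a, c) = pr_of P h c.
Proof.
rewrite /pr_of (partition_big f xpredT) //=; apply: eq_bigr => a _.
by apply: eq_bigl => w; rewrite /pairRV xpair_eqE andbC.
Qed.

Lemma pr_sum (A : finType) (f : Om -> A) : \sum_a pr_of P f a = \sum_w P w.
Proof.
by have := sum_pr f (fun _ => 1); under eq_bigr do rewrite mulr1;
  under [X in _ = X -> _]eq_bigr do rewrite mulr1.
Qed.

Section CMI.
Variables (A B C : finType) (fa : Om -> A) (fb : Om -> B) (fc : Om -> C).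
Definition pabc t := pr_of P (pairRV (pairRV fa fb) fc) t.
Definition pac (t : A * B * C) := pr_of P (pairRV fa fc) (t.1.1, t.2).
Definition pbc (t : A * B * C) := pr_of P (pairRV fb fc) (t.1.2, t.2).
Definition pc (t : A * B * C) := pr_of P fc t.2.

Lemma cmi_ln : cond_mutual_info P fa fb fc * ln 2 =
  \sum_t pabc t * (ln (pabc t) + ln (pc t) - ln (pac t) - ln (pbc t)).
Proof.
have -> : \sum_t pabc t * (ln (pabc t) + ln (pc t) - ln (pac t) - ln (pbc t)) =
  \sum_w P w * (ln (pabc (pairRV (pairRV fa fb) fc w)) + ln (pc (pairRV (pairRV fa fb) fc w))
      - ln (pac (pairRV (pairRV fa fb) fc w)) - ln (pbc (pairRV (pairRV fa fb) fc w))).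
  by rewrite (sum_pr _ (fun t => (ln (pabc t) + ln (pc t) - ln (pac t) - ln (pbc t)))).
rewrite /cond_mutual_info !entropy_w /log2.
rewrite -!sumrN -!big_split /= big_distrl /=.
apply: eq_bigr => w _; rewrite /pabc /pac /pbc /pc /pairRV /=.
have l2 : ln 2 != 0 :> R by rewrite gt_eqF // ln_gt0 // ltr1n.
field.
by [].
Qed.

Lemma cmi_hyps :
  [/\ forall t, 0 <= pabc t, forall t, pabc t <= pac t,
      forall t, pabc t <= pbc t, forall t, pac t <= pc t &
      \sum_t pac t * pbc t / pc t <= \sum_t pabc t].
Proof.
split.
- by move=> t; exact: pr_ge0.
- move=> [[a b] c]; apply: pr_le => w; rewrite /pairRV !xpair_eqE /=.
  by case/andP => /andP [-> _] ->.
- move=> [[a b] c]; apply: pr_le => w; rewrite /pairRV !xpair_eqE /=.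
  by case/andP => /andP [_ ->] ->.
- move=> [[a b] c]; apply: pr_le => w; rewrite /pairRV !xpair_eqE /=.
  by case/andP.
rewrite [X in _ <= X]pr_sum -(pr_sum fc).
have -> : \sum_t pac t * pbc t / pc t =
    \sum_a \sum_b \sum_c pr_of P (pairRV fa fc) (a, c) * pr_of P (pairRV fb fc) (b, c)
       / pr_of P fc c.
  rewrite -(pair_bigA _ (fun ab c => pac (ab, c) * pbc (ab, c) / pc (ab, c))) /=.
  rewrite -(pair_bigA _ (fun a b => \sum_c pac ((a, b), c) * pbc ((a, b), c) / pc ((a, b), c))) /=.
  by [].
rewrite exchange_big /=.
under eq_bigr do rewrite exchange_big /=.
rewrite exchange_big /=; apply: ler_sum => c _.
rewrite (eq_bigr (fun b => pr_of P fc c * pr_of P (pairRV fb fc) (b, c) / pr_of P fc c));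
  last by move=> b _; rewrite -mulr_suml -mulr_suml pr_marg.
rewrite -mulr_suml -mulr_sumr pr_marg.
have [->|n0] := eqVneq (pr_of P fc c) 0; first by rewrite mul0r.
by rewrite mulfK.
Qed.

Lemma cmi_ge0 : 0 <= cond_mutual_info P fa fb fc.
Proof.
have l2 : 0 < ln 2 :> R by rewrite ln_gt0 // ltr1n.
have := cmi_ln; case: cmi_hyps => h0 h1 h2 h3 hS.
have := shannon_core h0 h1 h2 h3 hS => H1 H2.
have h : 0 <= cond_mutual_info P fa fb fc * ln 2 by rewrite H2.
nra.
Qed.

Lemma cmi_eq0 : cond_mutual_info P fa fb fc = 0 ->
  forall t, pabc t * pc t = pac t * pbc t.
Proof.
move=> H; case: cmi_hyps => h0 h1 h2 h3 hS.
apply: (shannon_eq h0 h1 h2 h3 hS).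
by rewrite -cmi_ln H mul0r.
Qed.

Lemma cmi_eq0' : (forall t, pabc t * pc t = pac t * pbc t) ->
  cond_mutual_info P fa fb fc = 0.
Proof.
move=> H.
have l2 : ln 2 != 0 :> R by rewrite gt_eqF // ln_gt0 // ltr1n.
apply: (@mulIf _ (ln 2)) => //; rewrite mul0r cmi_ln.
apply: big1 => t _; case: cmi_hyps => h0 h1 h2 h3 _.
have [->|pos] := eqVneq (pabc t) 0; first by rewrite mul0r.
have p1 : 0 < pabc t by rewrite lt_def pos h0.
have p2 : 0 < pac t by apply: lt_le_trans (h1 t).
have p3 : 0 < pbc t by apply: lt_le_trans (h2 t).
have p4 : 0 < pc t by apply: lt_le_trans (h3 t).
have : ln (pabc t * pc t) = ln (pac t * pbc t) by rewrite H.
rewrite !lnM ?posrE // => e.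
apply/eqP; rewrite mulf_eq0; apply/orP; right; apply/eqP; lra.
Qed.

End CMI.
End Found.

Ltac peq := let w := fresh "w" in let w' := fresh "w'" in
  move=> w w'; rewrite /pairRV /= ?xpair_eqE;
  repeat match goal with |- context [?a == ?b] => case: (a == b) end; by [].

Section Submod.
Variables (R : realType) (Om : finType) (P : Om -> R).
Hypothesis P0 : forall w, 0 <= P w.

Lemma submod (A B J K : finType) (F : Om -> A) (G : Om -> B) (FG : Om -> J) (H : Om -> K) :
  (forall w w', (FG w == FG w') = (F w == F w') && (G w == G w')) ->
  (forall w w', F w == F w' -> H w == H w') ->
  (forall w w', G w == G w' -> H w == H w') ->
  entropy P FG + entropy P H <= entropy P F + entropy P G.
Proof.
move=> hJ hF hG; have := cmi_ge0 P0 F G H.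
rewrite /cond_mutual_info.
rewrite (@entropy_eq _ _ P _ _ (pairRV F H) F); last first.
  move=> w w'; rewrite /pairRV xpair_eqE; case: eqP => //= e.
  by apply: hF; apply/eqP.
rewrite (@entropy_eq _ _ P _ _ (pairRV G H) G); last first.
  move=> w w'; rewrite /pairRV xpair_eqE; case: eqP => //= e.
  by apply: hG; apply/eqP.
rewrite (@entropy_eq _ _ P _ _ (pairRV (pairRV F G) H) FG); last first.
  move=> w w'; rewrite /pairRV !xpair_eqE hJ.
  case: eqP => //= e1; case: eqP => //= e2; apply: hF; apply/eqP => //.
move=> h; lra.
Qed.

Lemma mono (A B : finType) (F : Om -> A) (G : Om -> B) :
  (forall w w', G w == G w' -> F w == F w') -> entropy P F <= entropy P G.
Proof.
move=> h; have := @submod _ _ _ _ G G G F (fun w w' => esym (andbb _)) h h; lra.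
Qed.

End Submod.

Section RI.
Variables (R : realType) (Om : finType) (P : Om -> R).
Hypothesis P0 : forall w, 0 <= P w.
Variables (A B MA MB WT : finType) (U : Om -> A) (V : Om -> B)
  (MU : Om -> MA) (MV : Om -> MB) (Wv : Om -> WT) (a0 : A).
Hypotheses (hU : cond_entropy P U (pairRV MU Wv) = 0)
  (hV : cond_entropy P V (pairRV MV Wv) = 0)
  (m1 : cond_mutual_info P Wv V U = 0) (m2 : cond_mutual_info P Wv U V = 0).

Lemma pr_swap (X Y : finType) (f : Om -> X) (g : Om -> Y) x y :
  pr_of P (pairRV f g) (x, y) = pr_of P (pairRV g f) (y, x).
Proof. by apply: eq_bigl => w; rewrite /pairRV !xpair_eqE andbC. Qed.

Definition phi a m := pr_of P (pairRV U Wv) (a, m) / pr_of P U a.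
Definition psi b m := pr_of P (pairRV V Wv) (b, m) / pr_of P V b.

Lemma key w : P w != 0 -> forall m, phi (U w) m = psi (V w) m.
Proof.
move=> Pw m.
have Pw' : 0 < P w by rewrite lt_def Pw P0.
set a := U w; set b := V w.
have pVU0 : 0 < pr_of P (pairRV V U) (b, a) by apply: lt_le_trans Pw' (pr_self _ _ _).
have pUV : pr_of P (pairRV V U) (b, a) = pr_of P (pairRV U V) (a, b) by rewrite pr_swap.
have pU : 0 < pr_of P U a by apply: lt_le_trans Pw' (pr_self _ _ _).
have pV : 0 < pr_of P V b by apply: lt_le_trans Pw' (pr_self _ _ _).
have e1 := cmi_eq0 P0 m1 ((m, b), a).
have e2 := cmi_eq0 P0 m2 ((m, a), b).
rewrite /pabc /pac /pbc /pc /= in e1 e2.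
have e3 : pr_of P (pairRV (pairRV Wv V) U) ((m, b), a) =
          pr_of P (pairRV (pairRV Wv U) V) ((m, a), b).
  apply: eq_bigl => w'; rewrite /pairRV !xpair_eqE.
  by case: (Wv w' == m); case: (V w' == b); case: (U w' == a).
rewrite /phi /psi pr_swap [pr_of P (pairRV V Wv) _]pr_swap.
rewrite -e3 -pUV in e2.
apply/eqP; rewrite eqr_div; [apply/eqP| by rewrite gt_eqF | by rewrite gt_eqF].
apply: (@mulIf _ (pr_of P (pairRV V U) (b, a))); first by rewrite gt_eqF.
apply/eqP; rewrite -subr_eq0.
set X := pr_of P (pairRV (pairRV Wv V) U) (m, b, a) in e1 e2 *.
set pWU := pr_of P (pairRV Wv U) (m, a) in e1 *.
set pWV := pr_of P (pairRV Wv V) (m, b) in e2 *.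
set qVU := pr_of P (pairRV V U) (b, a) in e1 e2 *.
set qU := pr_of P U a in e1 *.
set qV := pr_of P V b in e2 *.
have -> : pWU * qV * qVU - pWV * qU * qVU =
  qV * (pWU * qVU - X * qU) + qU * (X * qV - pWV * qVU) by ring.
by rewrite e1 e2 !subrr !mulr0 addr0.
Qed.


Definition fsel : {ffun A -> A} :=
  [ffun a => odflt a [pick a' | [forall m, phi a' m == phi a m]]].
Definition gsel : {ffun B -> A} :=
  [ffun b => odflt a0 [pick a' | [forall m, phi a' m == psi b m]]].

Lemma phi_f a m : phi (fsel a) m = phi a m.
Proof.
rewrite ffunE; case: pickP => [a' /forallP H /=|]; first exact/eqP.
by move/(_ a); rewrite /=; move/negbT/negP; case; apply/forallP.
Qed.

Lemma common_fg : common_fun P U V fsel gsel.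
Proof.
apply/forallP => w; apply/implyP => Pw; rewrite !ffunE.
have -> : [pick a' | [forall m, phi a' m == phi (U w) m]] =
          [pick a' | [forall m, phi a' m == psi (V w) m]].
  apply: eq_pick => a' /=; apply: eq_forallb => m; by rewrite key.
case: pickP => [//|/(_ (U w))].
by rewrite /=; move/negbT/negP; case; apply/forallP => m; rewrite key.
Qed.

Definition Cv w := fsel (U w).

Lemma pr_detg (X' Y' : finType) (F : Om -> X') (h : X' -> Y') x y :
  pr_of P (pairRV F (fun w => h (F w))) (x, y) = if h x == y then pr_of P F x else 0.
Proof.
case: ifP => hx.
  by apply: eq_bigl => w; rewrite /pairRV /= xpair_eqE; case: eqP => //= ->.
apply: big1 => w; rewrite /pairRV /= xpair_eqE => /andP [/eqP -> ]; by rewrite hx.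
Qed.

Lemma pUW_le a m : pr_of P (pairRV U Wv) (a, m) <= pr_of P U a.
Proof. apply: (pr_le P0) => w; rewrite /pairRV /= xpair_eqE; by case/andP. Qed.

Lemma cross a a' m : fsel a' = fsel a ->
  pr_of P (pairRV U Wv) (a', m) * pr_of P U a = pr_of P (pairRV U Wv) (a, m) * pr_of P U a'.
Proof.
move=> e.
have ph : phi a' m = phi a m by rewrite -phi_f e phi_f.
have [z|nz] := eqVneq (pr_of P U a') 0.
  have : pr_of P (pairRV U Wv) (a', m) = 0.
    by apply/eqP; rewrite eq_le (pr_ge0 P0) andbT -z pUW_le.
  by move=> ->; rewrite z !mulr0 mul0r.
have [z'|nz'] := eqVneq (pr_of P U a) 0.
  have : pr_of P (pairRV U Wv) (a, m) = 0.
    by apply/eqP; rewrite eq_le (pr_ge0 P0) andbT -z' pUW_le.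
  by move=> ->; rewrite z' !mulr0 mul0r.
move: ph; rewrite /phi => /eqP; rewrite eqr_div // => /eqP.
by [].
Qed.

Lemma cmi_UWC : cond_mutual_info P U Wv Cv = 0.
Proof.
apply: (cmi_eq0' P0) => -[[a m] c]; rewrite /pabc /pac /pbc /pc /=.
have hUC := @pr_detg _ _ U fsel a c.
have hUWC := @pr_detg _ _ (pairRV U Wv) (fun t => fsel t.1) (a, m) c.
rewrite /= in hUWC.
have e1 : pr_of P (pairRV (pairRV U Wv) Cv) ((a, m), c) =
          pr_of P (pairRV (pairRV U Wv) (fun w => fsel (pairRV U Wv w).1)) ((a, m), c) by [].
rewrite e1 hUWC.
have -> : pr_of P (pairRV U Cv) (a, c) = if fsel a == c then pr_of P U a else 0 by [].
case: eqP => [ec|]; last by rewrite !mul0r.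
rewrite -(pr_marg P U Cv c) -(pr_marg P U (pairRV Wv Cv) (m, c)).
have -> : \sum_a' pr_of P (pairRV U Cv) (a', c) =
          \sum_a' (if fsel a' == c then pr_of P U a' else 0).
  by apply: eq_bigr => a' _; rewrite -(@pr_detg _ _ U fsel).
have -> : \sum_a' pr_of P (pairRV U (pairRV Wv Cv)) (a', (m, c)) =
          \sum_a' (if fsel a' == c then pr_of P (pairRV U Wv) (a', m) else 0).
  apply: eq_bigr => a' _.
  rewrite -(@pr_detg _ _ (pairRV U Wv) (fun t => fsel t.1) (a', m) c).
  by apply: eq_bigl => w; rewrite /pairRV /Cv /= !xpair_eqE andbA.
rewrite !big_distrr /=; apply: eq_bigr => a' _.
case: eqP => [ea|]; last by rewrite !mulr0.
rewrite [RHS]mulrC (cross m); last by rewrite ea ec.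
by [].
Qed.

Lemma RI_le : residual_info P U V <= cond_mutual_info P MU MV Wv.
Proof.
have hC : entropy P Cv <= common_entropy P U V.
  rewrite /common_entropy.
  exact: (@le_bigmax_cond _ _ _ _ (fsel, gsel) _ (fun fg : {ffun A -> A} * {ffun B -> A} => entropy P (fun w => fg.1 (U w))) common_fg).
have EC := cmi_UWC; rewrite /cond_mutual_info in EC.
have e1 : entropy P (pairRV U Cv) = entropy P U.
  apply: entropy_eq => w w'; rewrite /pairRV /Cv /= xpair_eqE.
  by case: eqP => [->|]; rewrite ?eqxx.
have e2 : entropy P (pairRV (pairRV U Wv) Cv) = entropy P (pairRV U Wv).
  apply: entropy_eq => w w'; rewrite /pairRV /Cv /= !xpair_eqE.
  by case: eqP => [->|]; rewrite ?eqxx ?andbT.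
have m3 : entropy P Wv <= entropy P (pairRV Wv Cv) by apply: mono => //; peq.
have s1 := @submod _ _ P P0 _ _ _ _ (pairRV U V) (pairRV V Wv) (pairRV (pairRV U V) Wv) V.
have s1' : entropy P (pairRV (pairRV U V) Wv) + entropy P V <=
           entropy P (pairRV U V) + entropy P (pairRV V Wv) by apply: s1; peq.
set J3 := pairRV (pairRV U V) (pairRV MU Wv).
have s3 : entropy P J3 + entropy P (pairRV U Wv) <=
    entropy P (pairRV U (pairRV MU Wv)) + entropy P (pairRV (pairRV U V) Wv).
  by apply: submod => //; rewrite /J3; peq.
set J4 := pairRV J3 MV.
have s4 : entropy P J4 + entropy P (pairRV V Wv) <=
    entropy P (pairRV V (pairRV MV Wv)) + entropy P J3.
  by apply: submod => //; rewrite /J4 /J3; peq.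
have m4 : entropy P (pairRV (pairRV MU MV) Wv) <= entropy P J4.
  by apply: mono => //; rewrite /J4 /J3; peq.
move: hU hV; rewrite /residual_info /mutual_info /cond_mutual_info /cond_entropy.
move=> hU' hV'; lra.
Qed.
End RI.

Ltac peqh h1 h2 := let w := fresh "w" in let w' := fresh "w'" in
  move=> w w'; move: (h1 w w') (h2 w w'); rewrite /pairRV /= ?xpair_eqE;
  move=> /implyP + /implyP +;
  repeat match goal with |- context [?a == ?b] => case: (a == b) end; by [].

Section Main.
Variables (R : realType) (Om : finType) (P : Om -> R).
Hypothesis P0 : forall w, 0 <= P w.
Hypothesis P1 : \sum_w P w = 1.

Lemma cmi_mono (A A' B B' C : finType) (F : Om -> A) (F' : Om -> A')
  (G : Om -> B) (G' : Om -> B') (H : Om -> C) :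
  (forall w w', F' w == F' w' -> F w == F w') ->
  (forall w w', G' w == G' w' -> G w == G w') ->
  cond_mutual_info P F G H <= cond_mutual_info P F' G' H.
Proof.
move=> hF hG.
have t1 : entropy P (pairRV (pairRV F' G) H) + entropy P (pairRV F H) <=
   entropy P (pairRV F' H) + entropy P (pairRV (pairRV F G) H).
  by apply: submod => //; peqh hF hG.
have t2 : entropy P (pairRV (pairRV F' G') H) + entropy P (pairRV G H) <=
   entropy P (pairRV G' H) + entropy P (pairRV (pairRV F' G) H).
  by apply: submod => //; peqh hF hG.
rewrite /cond_mutual_info; lra.
Qed.

Lemma entropy_const : entropy P (fun _ => tt) = 0.
Proof.
rewrite /entropy (big_pred1 tt); last by case.
have -> : pr_of P (fun _ => tt) tt = 1 by rewrite /pr_of -P1; apply: eq_bigl.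
by rewrite /log2 ln1 mul0r mulr0 oppr0.
Qed.

Variables (X Y Z M1 M2 M3 : finType) (Sa : Om -> X) (Sb : Om -> Y) (Sc : Om -> Z)
  (Mab : Om -> M1) (Mbc : Om -> M2) (Mca : Om -> M3) (a0 : X) (c0 : Z).
Hypotheses (Ha : cond_entropy P Sa (pairRV Mab Mca) = 0)
  (Hb : cond_entropy P Sb (pairRV Mab Mbc) = 0)
  (Hc : cond_entropy P Sc (pairRV Mbc Mca) = 0)
  (Pa : cond_mutual_info P (pairRV Mab Mca) (pairRV Sb Sc) Sa = 0)
  (Pb : cond_mutual_info P (pairRV Mab Mbc) (pairRV Sa Sc) Sb = 0)
  (Pc : cond_mutual_info P (pairRV Mbc Mca) (pairRV Sa Sb) Sc = 0).

Lemma Gbound : cond_mutual_info P Mab Mbc Mca + cond_entropy P (pairRV Sa Sb) Sc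
  <= entropy P Mab.
Proof.
have f0 : entropy P (pairRV Mab Mca) + entropy P (fun _ => tt) <=
          entropy P Mab + entropy P Mca by apply: submod => //; peq.
rewrite entropy_const in f0.
set M := pairRV (pairRV Mab Mbc) Mca.
set N1 := pairRV M Sa. set N2 := pairRV N1 Sb. set N3 := pairRV N2 Sc.
have g1 : entropy P N1 + entropy P (pairRV Mab Mca) <=
    entropy P M + entropy P (pairRV Sa (pairRV Mab Mca))
  by apply: submod => //; rewrite /N1 /M; peq.
have g2 : entropy P N2 + entropy P (pairRV Mab Mbc) <=
    entropy P N1 + entropy P (pairRV Sb (pairRV Mab Mbc))
  by apply: submod => //; rewrite /N2 /N1 /M; peq.
have g3 : entropy P N3 + entropy P (pairRV Mbc Mca) <=
    entropy P N2 + entropy P (pairRV Sc (pairRV Mbc Mca))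
  by apply: submod => //; rewrite /N3 /N2 /N1 /M; peq.
have k1 : entropy P (pairRV (pairRV (pairRV Mbc Mca) (pairRV Sa Sb)) Sc) <= entropy P N3
  by apply: mono => //; rewrite /N3 /N2 /N1 /M; peq.
have k2 : entropy P (pairRV Mbc Mca) <= entropy P (pairRV (pairRV Mbc Mca) Sc)
  by apply: mono => //; peq.
move: Ha Hb Hc Pc; rewrite /cond_mutual_info /cond_entropy => ha hb hc pc; lra.
Qed.

Lemma markov1 : cond_mutual_info P Mca Sc Sa = 0.
Proof.
apply/eqP; rewrite eq_le cmi_ge0 // andbT -Pa; apply: cmi_mono; peq.
Qed.

Lemma markov2 : cond_mutual_info P Mca Sa Sc = 0.
Proof.
apply/eqP; rewrite eq_le cmi_ge0 // andbT -Pc; apply: cmi_mono; peq.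
Qed.

Lemma main_gen :
  residual_info P Sa Sc + cond_entropy P (pairRV Sa Sb) Sc <= entropy P Mab /\
  residual_info P Sc Sa + cond_entropy P (pairRV Sa Sb) Sc <= entropy P Mab.
Proof.
have G := Gbound.
have r1 := @RI_le _ _ P P0 _ _ _ _ _ Sa Sc Mab Mbc Mca a0 Ha Hc markov1 markov2.
have r2 := @RI_le _ _ P P0 _ _ _ _ _ Sc Sa Mbc Mab Mca c0 Hc Ha markov2 markov1.
have sw : cond_mutual_info P Mbc Mab Mca = cond_mutual_info P Mab Mbc Mca.
  have e : entropy P (pairRV (pairRV Mbc Mab) Mca) = entropy P (pairRV (pairRV Mab Mbc) Mca).
    by apply: entropy_eq; peq.
  rewrite /cond_mutual_info e; lra.
split; lra.
Qed.

End Main.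

Section Swaps.
Variables (R : realType) (Om : finType) (P : Om -> R).
Variables (A B C D : finType) (f : Om -> A) (g : Om -> B) (h : Om -> C) (k : Om -> D).

Lemma ce_sw : cond_entropy P f (pairRV g h) = cond_entropy P f (pairRV h g).
Proof.
rewrite /cond_entropy (@entropy_eq _ _ P _ _ (pairRV f (pairRV g h)) (pairRV f (pairRV h g))); last by peq.
by rewrite (@entropy_eq _ _ P _ _ (pairRV g h) (pairRV h g)); last by peq.
Qed.

Lemma ce_sw1 : cond_entropy P (pairRV f g) h = cond_entropy P (pairRV g f) h.
Proof.
rewrite /cond_entropy (@entropy_eq _ _ P _ _ (pairRV (pairRV f g) h) (pairRV (pairRV g f) h)) //.
peq.
Qed.

Lemma cmi_swA : cond_mutual_info P (pairRV f g) k h = cond_mutual_info P (pairRV g f) k h.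
Proof.
rewrite /cond_mutual_info.
rewrite (@entropy_eq _ _ P _ _ (pairRV (pairRV f g) h) (pairRV (pairRV g f) h)); last by peq.
by rewrite (@entropy_eq _ _ P _ _ (pairRV (pairRV (pairRV f g) k) h) (pairRV (pairRV (pairRV g f) k) h)); last by peq.
Qed.

Lemma cmi_swB : cond_mutual_info P k (pairRV f g) h = cond_mutual_info P k (pairRV g f) h.
Proof.
rewrite /cond_mutual_info.
rewrite (@entropy_eq _ _ P _ _ (pairRV (pairRV f g) h) (pairRV (pairRV g f) h)); last by peq.
by rewrite (@entropy_eq _ _ P _ _ (pairRV (pairRV k (pairRV f g)) h) (pairRV (pairRV k (pairRV g f)) h)); last by peq.
Qed.
End Swaps.

Unset Implicit Arguments.

Theorem theorem10 (R : realType) (X Y Z M12 M23 M31 : finType)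
  (p : X * Y * Z -> R) (q : X * Y * Z -> M12 * M23 * M31 -> R) :
  is_pmf p -> is_CMSS p q ->
  let P := joint p q in
  entropy P (@rvM12 X Y Z M12 M23 M31) >=
    Num.max (residual_info P rvX rvZ) (residual_info P rvY rvZ)
    + cond_entropy P (pairRV rvX rvY) rvZ /\
  entropy P (@rvM23 X Y Z M12 M23 M31) >=
    Num.max (residual_info P rvX rvZ) (residual_info P rvX rvY)
    + cond_entropy P (pairRV rvY rvZ) rvX /\
  entropy P (@rvM31 X Y Z M12 M23 M31) >=
    Num.max (residual_info P rvY rvZ) (residual_info P rvX rvY)
    + cond_entropy P (pairRV rvX rvZ) rvY.
Proof.
move=> [p0 p1] [hq [E1 [E2 [E3 [Q1 [Q2 Q3]]]]]] P.
have P0 : forall w, 0 <= P w.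
  by move=> w; rewrite /P /joint mulr_ge0 //; case: (hq w.1) => ->.
have P1 : \sum_w P w = 1.
  rewrite /P /joint -p1.
  rewrite -(pair_bigA _ (fun s m => p s * q s m)) /=.
  apply: eq_bigr => s _; rewrite -mulr_sumr; case: (hq s) => _ ->; by rewrite mulr1.
have [s _] : exists s : X * Y * Z, true.
  case: (pickP (@predT (X * Y * Z))) => [s _|H]; first by exists s.
  by move: p1; rewrite (eq_bigl _ _ H) big_pred0_eq => /eqP; rewrite eq_sym oner_eq0.
move: s => [[x0 y0] z0].
rewrite !addr_maxl !ge_max.
have I1 := main_gen P0 P1 x0 z0 E1 E2 E3 Q1 Q3.
have I2 := @main_gen _ _ P P0 P1 _ _ _ _ _ _ (@rvY X Y Z M12 M23 M31) rvX rvZ rvM12 rvM31 rvM23 y0 z0 E2 E1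
  ltac:(by rewrite ce_sw) Q2 ltac:(by rewrite cmi_swA cmi_swB).
rewrite ce_sw1 in I2.
have I3 := @main_gen _ _ P P0 P1 _ _ _ _ _ _ (@rvZ X Y Z M12 M23 M31) rvY rvX rvM23 rvM12 rvM31 z0 x0 E3
  ltac:(by rewrite ce_sw) E1 ltac:(by rewrite cmi_swB) ltac:(by rewrite cmi_swB).
rewrite ce_sw1 in I3.
have I4 := @main_gen _ _ P P0 P1 _ _ _ _ _ _ (@rvY X Y Z M12 M23 M31) rvZ rvX rvM23 rvM31 rvM12 y0 x0
  ltac:(by rewrite ce_sw) E3 ltac:(by rewrite ce_sw)
  ltac:(by rewrite cmi_swA cmi_swB) ltac:(by rewrite cmi_swA).
have I5 := @main_gen _ _ P P0 P1 _ _ _ _ _ _ (@rvZ X Y Z M12 M23 M31) rvX rvY rvM31 rvM12 rvM23 z0 y0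
  ltac:(by rewrite ce_sw) ltac:(by rewrite ce_sw) E2
  ltac:(by rewrite cmi_swA) ltac:(by rewrite cmi_swB).
rewrite ce_sw1 in I5.
have I6 := @main_gen _ _ P P0 P1 _ _ _ _ _ _ (@rvX X Y Z M12 M23 M31) rvZ rvY rvM31 rvM23 rvM12 x0 y0
  ltac:(by rewrite ce_sw) ltac:(by rewrite ce_sw) ltac:(by rewrite ce_sw)
  ltac:(by rewrite cmi_swA cmi_swB) ltac:(by rewrite cmi_swA).
case: I1 I2 I3 I4 I5 I6 => [i1 _] [i2 _] [_ i3] [_ i4] [_ i5] [i6 _].
by rewrite i1 i2 i3 i4 i5 i6.
Qed.
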